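(* For the binary tree-shifts $X_5=(A,E)$ and $X_7=(A,G)$, the limit $h_{PS}$ exists and $$h_{PS}(X_5)=h_{PS}(X_7)=\sum_{n=2}^\infty\frac{\log n}{2^n}.$$
   Context: Binary tree-shifts: $k=2$, directions $a_1,a_2$, alphabet $\{0,1\}$; $(P,Q)$ is the set of trees $t:\{a_1,a_2\}^*\to\{0,1\}$ with $P_{t_x,t_{xa_1}}=1$, $Q_{t_x,t_{xa_2}}=1$ for all nodes $x$. Matrices: $A=\begin{pmatrix}1&1\\1&1\end{pmatrix}$, $E=\begin{pmatrix}1&0\\1&1\end{pmatrix}$, $G=\begin{pmatrix}1&1\\0&1\end{pmatrix}$. $p(n)$ is the number of allowed blocks of length $n$ (labellings $t|_{\Delta_n}$, $\Delta_n$ the words of length $\le n$), and $h_{PS}=\lim_{n\to\infty}\frac{\log p(n)}{1+2+\cdots+2^n}$. *)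

(* Defs.v *)
From HB Require Import structures.
From mathcomp Require Import all_boot all_order all_algebra.
From mathcomp Require Import all_classical all_reals all_analysis.
Set Implicit Arguments. Unset Strict Implicit. Unset Printing Implicit Defensive.
Import Order.TTheory GRing.Theory Num.Theory.

(* Alphabet {0,1} = 'I_2; directions a_1 = false, a_2 = true;
   nodes are words in seq bool, x a_i = rcons x b. *)

Definition tree := seq bool -> 'I_2.

Definition tree_shift (P Q : 'M[nat]_2) : set tree :=
  fun t => forall x : seq bool,
    P (t x) (t (rcons x false)) = 1%N /\ Q (t x) (t (rcons x true)) = 1%N.

Definition matA : 'M[nat]_2 := \matrix_(i < 2, j < 2) 1%N.
Definition matE : 'M[nat]_2 :=
  \matrix_(i < 2, j < 2) (if (val i == 0%N) && (val j == 1%N) then 0%N else 1%N).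
Definition matG : 'M[nat]_2 :=
  \matrix_(i < 2, j < 2) (if (val i == 1%N) && (val j == 0%N) then 0%N else 1%N).

Definition Delta (n : nat) := {k : 'I_n.+1 & k.-tuple bool}.
Definition word_of n (w : Delta n) : seq bool := val (tagged w).

Definition allowed_block (X : set tree) n (f : {ffun Delta n -> 'I_2}) : Prop :=
  exists t, X t /\ forall w : Delta n, f w = t (word_of w).

Definition p_count (X : set tree) (n : nat) : nat :=
  #|[set f : {ffun Delta n -> 'I_2} | `[< allowed_block X f >]]|.

Definition hPS_seq (R : realType) (X : set tree) (n : nat) : R :=
  ln ((p_count X n)%:R) / (\sum_(0 <= i < n.+1) 2 ^ i)%N%:R.

(* Main.v *)
Require Import Defs.
From HB Require Import structures.
From mathcomp Require Import all_boot all_order all_algebra.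
From mathcomp Require Import all_classical all_reals all_analysis.
From mathcomp Require Import ring lra zify.
Import Order.TTheory GRing.Theory Num.Theory numFieldNormedType.Exports.
Set Implicit Arguments. Unset Strict Implicit. Unset Printing Implicit Defensive.

Fixpoint TrT (n : nat) : finType :=
  match n with 0 => 'I_2 | m.+1 => ('I_2 * (TrT m * TrT m))%type end.

Definition root n : TrT n -> 'I_2 :=
  match n return TrT n -> 'I_2 with 0 => fun t => t | m.+1 => fun t => t.1 end.

Fixpoint get n : TrT n -> seq bool -> 'I_2 :=
  match n return TrT n -> seq bool -> 'I_2 with
  | 0 => fun t w => t
  | m.+1 => fun t w => match w with
              | [::] => t.1
              | b :: w' => get (if b then t.2.2 else t.2.1) w' end
  end.

Section V.
Variables P Q : 'M[nat]_2.
Fixpoint valid n : TrT n -> bool :=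
  match n return TrT n -> bool with
  | 0 => fun _ => true
  | m.+1 => fun t => [&& P t.1 (root t.2.1) == 1%N, Q t.1 (root t.2.2) == 1%N,
                        valid t.2.1 & valid t.2.2] end.
End V.

Fixpoint build n (g : seq bool -> 'I_2) : TrT n :=
  match n return TrT n with
  | 0 => g [::]
  | m.+1 => (g [::], (build m (fun w => g (false :: w)), build m (fun w => g (true :: w))))
  end.

Lemma root_get n (t : TrT n) : root t = get t [::].
Proof. by case: n t. Qed.

Lemma get_build n g w : (size w <= n)%N -> get (build n g) w = g w.
Proof.
elim: n g w => [|n IH] g [|b w] //= Hs.
by case: b; rewrite IH.
Qed.

Lemma get_inj n (t1 t2 : TrT n) :
  (forall w, (size w <= n)%N -> get t1 w = get t2 w) -> t1 = t2.
Proof.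
elim: n t1 t2 => [|n IH] t1 t2 H; first by have := H [::] isT.
case: t1 t2 H => r1 [L1 R1] [r2 [L2 R2]] H.
have -> : r1 = r2 by have := H [::] isT.
congr (_, (_, _)); apply: IH => w Hw.
  by have := H (false :: w) Hw.
by have := H (true :: w) Hw.
Qed.

Section Eq.
Variables P Q : 'M[nat]_2.

Lemma valid_build n g :
  (forall x, (size x < n)%N -> P (g x) (g (rcons x false)) = 1%N /\
                              Q (g x) (g (rcons x true)) = 1%N) ->
  valid P Q (build n g).
Proof.
elim: n g => [|n IH] g H //=.
rewrite !root_get !get_build //.
have [-> ->] := H [::] isT.
rewrite !eqxx /=; apply/andP; split; apply: IH => x Hx.
  exact: (H (false :: x)).
exact: (H (true :: x)).
Qed.

Lemma valid_get n (t : TrT n) x : valid P Q t -> (size x < n)%N ->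
  P (get t x) (get t (rcons x false)) = 1%N /\ Q (get t x) (get t (rcons x true)) = 1%N.
Proof.
elim: n t x => [|n IH] t x //=.
case: t => r [L R] /and4P [/eqP HP /eqP HQ vL vR].
case: x => [|b x] /= Hx.
  by rewrite -!root_get.
by case: b; apply: IH.
Qed.

Variable c : 'I_2.
Hypothesis Hc : forall i, P i c = 1%N /\ Q i c = 1%N.

Definition ext n (t : TrT n) : tree := fun x => if (size x <= n)%N then get t x else c.

Lemma ext_shift n (t : TrT n) : valid P Q t -> tree_shift P Q (ext t).
Proof.
move=> vt x; rewrite /ext !size_rcons.
case: (ltngtP (size x) n) => H.
- exact: valid_get.
- exact: Hc.
- exact: Hc.
Qed.

Definition phi n (t : TrT n) : {ffun Delta n -> 'I_2} := [ffun w => get t (word_of w)].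

Lemma size_word n (w : Delta n) : (size (word_of w) <= n)%N.
Proof. by rewrite /word_of size_tuple -ltnS. Qed.

Lemma phi_inj n : injective (@phi n).
Proof.
move=> t1 t2 H; apply: get_inj => w Hw.
pose w' : Delta n := existT (fun k : 'I_n.+1 => k.-tuple bool) (Ordinal (Hw : (size w < n.+1)%N)) (in_tuple w).
have := congr1 (fun f : {ffun Delta n -> 'I_2} => f w') H.
by rewrite !ffunE.
Qed.

Lemma allowedP n f : allowed_block (tree_shift P Q) f <-> exists2 t : TrT n, valid P Q t & f = phi t.
Proof.
split.
  case=> tr [Xt Hf]; exists (build n tr).
    by apply: valid_build => x _; apply: Xt.
  by apply/ffunP => w; rewrite ffunE get_build ?size_word.
case=> t vt ->; exists (ext t); split; first exact: ext_shift.
by move=> w; rewrite ffunE /ext size_word.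
Qed.

Lemma p_count_valid n : p_count (tree_shift P Q) n = #|[set t : TrT n | valid P Q t]|.
Proof.
rewrite /p_count -(card_imset _ (@phi_inj n)); apply: eq_card => f.
rewrite !inE; apply/asboolP/imsetP.
  by case/allowedP => t vt ->; exists t; rewrite ?inE.
by case=> t; rewrite inE => vt ->; apply/allowedP; exists t.
Qed.
End Eq.

Lemma sum_I2 (F : 'I_2 -> nat) : \sum_(j < 2) F j = F ord0 + F ord_max.
Proof. by rewrite big_ord_recr big_ord_recr big_ord0 /= add0n; congr (F _ + _); apply: val_inj. Qed.

Lemma sum_pick (i : 'I_2) (G : 'I_2 -> nat) : \sum_(r < 2) (r == i) * G r = G i.
Proof.
rewrite sum_I2; case: i => [[|[|k]] Hk] //=.
  by rewrite mul0n addn0 mul1n; congr G; apply: val_inj.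
by rewrite mul0n add0n mul1n; congr G; apply: val_inj.
Qed.

Section Count.
Variables P Q : 'M[nat]_2.

Definition cnt n (i : 'I_2) := \sum_(t : TrT n) (valid P Q t && (root t == i)).

Lemma card_valid n : #|[set t : TrT n | valid P Q t]| = cnt n ord0 + cnt n ord_max.
Proof.
rewrite -sum1_card big_mkcond /cnt -big_split /=; apply: eq_bigr => t _.
rewrite inE; case: (valid P Q t) => //=.
by case: (root t) => [[|[|k]] Hk].
Qed.

Lemma cnt0 i : cnt 0 i = 1.
Proof.
rewrite /cnt /= (eq_bigr (fun t : 'I_2 => (t == i) * 1)); last by move=> t _; rewrite muln1.
by rewrite -[X in _ = X](sum_pick i (fun _ => 1)).
Qed.

Lemma split_root m (a : 'I_2 -> bool) :
  \sum_(t : TrT m) (a (root t) && valid P Q t) = \sum_(j < 2) a j * cnt m j.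
Proof.
rewrite /cnt (eq_bigr (fun t : TrT m => \sum_(j < 2) a j * (valid P Q t && (root t == j)))).
  by rewrite exchange_big /=; apply: eq_bigr => j _; rewrite big_distrr.
move=> t _; rewrite sum_I2.
move: (root t) => r; case: r => [[|[|k]] Hk] //=.
  have -> : Ordinal Hk = ord0 by apply: val_inj.
  have -> : (ord0 == ord_max :> 'I_2) = false by [].
  by rewrite eqxx andbT andbF muln0 addn0 mulnb.
have -> : Ordinal Hk = ord_max by apply: val_inj.
have -> : (ord_max == ord0 :> 'I_2) = false by [].
by rewrite eqxx andbT andbF muln0 add0n mulnb.
Qed.

Lemma cnt_rec m i : cnt m.+1 i =
  (\sum_(j < 2) (P i j == 1) * cnt m j) * (\sum_(j < 2) (Q i j == 1) * cnt m j).
Proof.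
rewrite -!split_root /cnt.
change (\sum_(t : 'I_2 * (TrT m * TrT m)) (@valid P Q m.+1 t && (@root m.+1 t == i)) =
 (\sum_(t : TrT m) ((P i (root t) == 1) && valid P Q t)) *
 (\sum_(t : TrT m) ((Q i (root t) == 1) && valid P Q t))).
pose a (r : 'I_2) (L : TrT m) : nat := (P r (root L) == 1) && valid P Q L.
pose b (r : 'I_2) (L : TrT m) : nat := (Q r (root L) == 1) && valid P Q L.
pose G (r : 'I_2) (lr : TrT m * TrT m) := (r == i) * (a r lr.1 * b r lr.2).
rewrite (eq_bigr (fun t => G t.1 t.2)); last first.
  case=> r [L R] _; rewrite /G /a /b /= !mulnb.
  by case: (r == i); case: (P r _ == 1); case: (Q r _ == 1); case: (valid P Q L); case: (valid P Q R).
rewrite -(pair_bigA _ G) /G.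
rewrite (eq_bigr (fun r => (r == i) * \sum_(lr : TrT m * TrT m) (a r lr.1 * b r lr.2))); last first.
  by move=> r _; rewrite big_distrr.
rewrite (sum_pick i (fun r => \sum_(lr : TrT m * TrT m) (a r lr.1 * b r lr.2))).
rewrite -(pair_bigA _ (fun L R => a i L * b i R)) big_distrl /=.
by apply: eq_bigr => L _; rewrite big_distrr.
Qed.
End Count.

Lemma seq_props (a b : nat -> nat) : a 0 = 1 -> b 0 = 1 ->
  (forall n, a n.+1 = (a n + b n) * a n) -> (forall n, b n.+1 = (a n + b n) * (a n + b n)) ->
  let p n := a n + b n in
  p 0 = 2 /\ (forall n, p n.+1 * n.+2 = n.+3 * p n ^ 2) /\ (forall n, 0 < p n).
Proof.
move=> a0 b0 ha hb p.
have H : forall n, b n = n.+1 * a n /\ 0 < a n.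
  elim=> [|n [IHb IHa]]; first by rewrite a0 b0.
  rewrite ha hb IHb; split; first by ring.
  by rewrite muln_gt0 IHa andbT addn_gt0 IHa.
split; first by rewrite /p a0 b0.
split=> n; rewrite /p.
  have [Hb Ha] := H n.
  by rewrite ha hb Hb; ring.
by have [_ Ha] := H n; rewrite addn_gt0 Ha.
Qed.

Lemma AE_props : let p := p_count (tree_shift matA matE) in
  p 0 = 2 /\ (forall n, p n.+1 * n.+2 = n.+3 * p n ^ 2) /\ (forall n, 0 < p n).
Proof.
have Hc : forall i, matA i ord0 = 1 /\ matE i ord0 = 1.
  by move=> i; rewrite /matA /matE !mxE andbF.
have -> : p_count (tree_shift matA matE) =
  (fun n => cnt matA matE n ord0 + cnt matA matE n ord_max).
  by apply: funext => n; rewrite (p_count_valid Hc) card_valid.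
apply: seq_props; rewrite ?cnt0 // => n; rewrite cnt_rec !sum_I2 /matA /matE !mxE /=;
  ring.
Qed.

Lemma AG_props : let p := p_count (tree_shift matA matG) in
  p 0 = 2 /\ (forall n, p n.+1 * n.+2 = n.+3 * p n ^ 2) /\ (forall n, 0 < p n).
Proof.
have Hc : forall i, matA i ord_max = 1 /\ matG i ord_max = 1.
  by move=> i; rewrite /matA /matG !mxE andbF.
have -> : p_count (tree_shift matA matG) =
  (fun n => cnt matA matG n ord_max + cnt matA matG n ord0).
  by apply: funext => n; rewrite (p_count_valid Hc) card_valid addnC.
apply: seq_props; rewrite ?cnt0 // => n; rewrite cnt_rec !sum_I2 /matA /matG !mxE /=;
  ring.
Qed.

Local Open Scope classical_set_scope.
Local Open Scope ring_scope.
Section Real.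
Variable R : realType.

Definition sq (N : nat) : R := \sum_(2 <= k < N) ln (k%:R : R) / 2 ^+ k.

Lemma sq_rec N : sq N.+3 = sq N.+2 + ln (N.+2%:R : R) / 2 ^+ N.+2.
Proof. by rewrite /sq big_nat_recr. Qed.

Lemma sq2 : sq 2 = 0.
Proof. by rewrite /sq big_geq. Qed.

Lemma sq_step N : sq N <= sq N.+1.
Proof.
case: N => [|[|N]]; first by rewrite /sq !big_geq.
  by rewrite /sq !big_geq.
rewrite sq_rec lerDl divr_ge0 // ?exprn_ge0 // ln_ge0 // ler1n //.
Qed.

Lemma sq_nd : nondecreasing_seq sq.
Proof. by apply/nondecreasing_seqP => n; exact: sq_step. Qed.

Variable p : nat -> nat.
Hypothesis p0 : p 0 = 2%N.
Hypothesis prec : forall n, (p n.+1 * n.+2 = n.+3 * p n ^ 2)%N.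
Hypothesis ppos : forall n, (0 < p n)%N.

Let L n : R := ln (p n)%:R.

Lemma L_rec n : L n.+1 + ln (n.+2%:R) = ln (n.+3%:R) + 2 * L n.
Proof.
have := congr1 (fun m : nat => ln (m%:R : R)) (prec n).
rewrite !natrM !lnM ?posrE ?ltr0n ?ppos ?mulr_gt0 ?ltr0n ?ppos // => ->.
rewrite /L; ring.
Qed.

Lemma L_closed n : L n = ln (n.+2%:R) + 2 ^+ n.+1 * sq n.+2.
Proof.
elim: n => [|n IH]; first by rewrite /L p0 sq2 mulr0 addr0.
have := L_rec n; rewrite IH sq_rec => H.
have -> : L n.+1 = ln (n.+3%:R) + 2 * (ln (n.+2%:R) + 2 ^+ n.+1 * sq n.+2) - ln (n.+2%:R).
  by rewrite -H addrK.
rewrite mulrDr.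
have e : 2 * 2 ^+ n.+1 * (ln (n.+2%:R : R) / (2 * 2 ^+ n.+1)) = ln (n.+2%:R).
  by rewrite mulrC -mulrA mulVf ?mulr1 // mulf_neq0 // expf_neq0.
rewrite [2 ^+ n.+2]exprS mulrDr e.
set a := ln _; set b := ln _; set c := 2 ^+ n.+1; set d := sq _.
ring.
Qed.

Lemma ln2_ge0 : 0 <= ln (2 : R).
Proof. by rewrite ln_ge0 // ler1n. Qed.

Lemma L_bound n : L n + ln 2 <= 2 ^+ n.+1 * ln 2.
Proof.
elim: n => [|n IH]; first by rewrite /L p0 expr1; lra.
have H := L_rec n.
have Hl : ln (n.+3%:R : R) <= ln 2 + ln (n.+2%:R).
  rewrite -lnM ?posrE ?ltr0n // ler_ln ?posrE ?ltr0n //.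
  by rewrite -natrM ler_nat; lia.
rewrite exprS -mulrA.
have := ln2_ge0; lra.
Qed.

Lemma sq_bound N : sq N <= ln 2.
Proof.
apply: (le_trans (_ : sq N <= sq N.+2)).
  exact: (le_trans (sq_step N) (sq_step N.+1)).
have H := L_bound N; rewrite L_closed in H.
have Hp : (0 : R) < 2 ^+ N.+1 by rewrite exprn_gt0.
have Hl : 0 <= ln (N.+2%:R : R) by rewrite ln_ge0 // ler1n //.
have H2 := ln2_ge0.
rewrite -(ler_pM2l Hp); nra.
Qed.


Lemma sq_cvg : sq @ \oo --> sup (range sq).
Proof.
apply: nondecreasing_cvgn; first exact: sq_nd.
by exists (ln 2) => _ [N _ <-]; exact: sq_bound.
Qed.

Lemma pow_sum_nat n : ((\sum_(0 <= i < n.+1) 2 ^ i) + 1 = 2 ^ n.+1)%N.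
Proof.
elim: n => [|n IH]; first by rewrite big_nat1.
by rewrite big_nat_recr //= (expnS 2 n.+1); lia.
Qed.

Lemma pow_sum n : ((\sum_(0 <= i < n.+1) 2 ^ i)%N%:R : R) = 2 ^+ n.+1 - 1.
Proof.
have := congr1 (fun m : nat => (m%:R : R)) (pow_sum_nat n).
rewrite /= natrD natrX => <-; ring.
Qed.

Lemma hps_eq n : L n / (\sum_(0 <= i < n.+1) 2 ^ i)%N%:R =
  (ln (n.+2%:R) / 2 ^+ n.+1 + sq n.+2) * (1 - (2^-1 : R) ^+ n.+1)^-1.
Proof.
rewrite pow_sum L_closed exprVn.
have H2 : (2 : R) <= 2 ^+ n.+1.
  by rewrite exprS ler_peMr // exprn_ege1 // ler1n.
move: H2; set c := 2 ^+ n.+1; set a := ln _; set d := sq _ => H2.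
have c0 : c != 0 by apply/eqP => c0; rewrite c0 in H2; lra.
have c1 : c - 1 != 0 by apply/eqP => c1; lra.
by field; rewrite c0 c1.
Qed.


Lemma nat_bound n : (n.+2 * n.+1 <= 4 * 2 ^ n.+1)%N.
Proof.
suff : (n.+2 * n.+1 <= 4 * 2 ^ n.+1)%N && (2 * n + 4 <= 4 * 2 ^ n.+1)%N by case/andP.
elim: n => [//|n /andP [IH1 IH2]].
rewrite (expnS 2 n.+1); apply/andP; split; nia.
Qed.

Lemma lnterm_cvg : (fun n => ln (n.+2%:R : R) / 2 ^+ n.+1) @ \oo --> 0.
Proof.
apply: (@squeeze_cvgr _ _ _ _ (cst 0) (fun n => 4 * harmonic n)).
- apply: nearW => n /=.
  have c0 : (0 : R) < 2 ^+ n.+1 by rewrite exprn_gt0.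
  have m0 : (0 : R) < n.+1%:R by rewrite ltr0n.
  have hl : ln (n.+2%:R : R) <= n.+2%:R by apply/ltW/ln_sublinear; rewrite ltr0n.
  have hl0 : 0 <= ln (n.+2%:R : R) by rewrite ln_ge0 // ler1n.
  have hb : (n.+2%:R * n.+1%:R : R) <= 4 * 2 ^+ n.+1.
    by have := nat_bound n; rewrite -(ler_nat R) !natrM natrX.
  apply/andP; split; first exact: divr_ge0 hl0 (ltW c0).
  rewrite ler_pdivrMr // mulrAC ler_pdivlMr //.
  nra.
- exact: cvg_cst.
- have := cvgMl_tmp (a := 4) (@cvg_harmonic R); rewrite mulr0; exact.
Qed.

Lemma v_cvg : (fun n => (1 - (2^-1 : R) ^+ n.+1)^-1) @ \oo --> (1 : R).
Proof.
have H : (fun n => (2^-1 : R) ^+ n.+1) @ \oo --> 0.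
  have Hz : `|2^-1 : R| < 1 by rewrite ger0_norm ?invr_ge0 // invf_lt1 //; lra.
  have := cvg_expr Hz; rewrite -(cvg_shiftn 1%N) => H0.
  have e : (fun n => (2^-1:R) ^+ n.+1) = (fun n => (2^-1:R)^+ (n + 1)%N).
    by apply: funext => n; rewrite addn1.
  by rewrite e; exact: H0.
rewrite -[X in _ --> X]invr1.
apply: cvgV; first exact: oner_neq0.
rewrite -[X in _ --> X]subr0.
apply: cvgB; [exact: cvg_cst | exact: H].
Qed.

Lemma hps_cvg : (fun n => L n / (\sum_(0 <= i < n.+1) 2 ^ i)%N%:R) @ \oo --> sup (range sq).
Proof.
have -> : (fun n => L n / (\sum_(0 <= i < n.+1) 2 ^ i)%N%:R) =
  (fun n => ln (n.+2%:R : R) / 2 ^+ n.+1 + sq n.+2) \* (fun n => (1 - (2^-1 : R) ^+ n.+1)^-1).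
  by apply: funext => n; rewrite hps_eq.
have -> : sup (range sq) = (0 + sup (range sq)) * 1 by rewrite add0r mulr1.
apply: cvgM; last exact: v_cvg.
apply: cvgD; first exact: lnterm_cvg.
have := sq_cvg; rewrite -(cvg_shiftn 2%N) => H0.
have e : (fun n => sq n.+2) = (fun n => sq (n + 2)%N).
  by apply: funext => n; rewrite addn2.
by rewrite e; exact: H0.
Qed.

End Real.

Theorem mainTheorem14 (R : realType) :
  exists S : R,
    ((fun N : nat => \sum_(2 <= k < N) ln (k%:R : R) / 2 ^+ k) @ \oo --> S) /\
    (hPS_seq R (tree_shift matA matE) @ \oo --> S) /\
    (hPS_seq R (tree_shift matA matG) @ \oo --> S).
Proof.
have [a0 [arec apos]] := AE_props.
have [g0 [grec gpos]] := AG_props.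
exists (sup (range (@sq R))).
split; first exact: (sq_cvg a0 arec apos).
split; first exact: (hps_cvg a0 arec apos).
exact: (hps_cvg g0 grec gpos).
Qed.
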